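(* If $G$ is a finite metacyclic group, then Ganea's homomorphism $H_1(G)\otimes Z(G)\rightarrow H_2(G)$ is an epimorphism.
   Context: A group $G$ is metacyclic if it has a normal cyclic subgroup $K$ with $G/K$ cyclic. $Z(G)$ is the center of $G$ and $H_i$ denotes integral homology. For the central subgroup $Z(G)$ there is Ganea's exact sequence $$H_1(G)\otimes Z(G)\to H_2(G)\to H_2(G/Z(G))\to Z(G)\to H_1(G)\to H_1(G/Z(G))\to 0,$$ and Ganea's homomorphism is its first map $H_1(G)\otimes Z(G)\to H_2(G)$. *)

(* Defs.v *)
From mathcomp Require Import all_boot all_algebra all_fingroup all_solvable.
From mathcomp Require Import center.
Set Implicit Arguments. Unset Strict Implicit. Unset Printing Implicit Defensive.
Import GRing.Theory.
Local Open Scope ring_scope.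

(* Integral group homology of a finite group gT in low degrees, computed
   from the (unnormalized) bar complex with trivial coefficients Z:
     C_n = free abelian group on gT^n, represented as int-valued finite
     functions on gT^n (gT is finite, so every such function has finite
     support), with the standard boundary
       d[g|h]   = [h] - [gh] + [g]
       d[g|h|k] = [h|k] - [gh|k] + [g|hk] - [g|h].
   H_2(G) = ker d_2 / im d_3. *)

Section Bar.
Variable gT : finGroupType.

Definition chain1 := {ffun gT -> int}.
Definition chain2 := {ffun (gT * gT)%type -> int}.
Definition chain3 := {ffun (gT * gT * gT)%type -> int}.

Definition e1 (x : gT) : chain1 := [ffun y => (y == x)%:R].
Definition e2 (x y : gT) : chain2 := [ffun p => (p == (x, y))%:R].

Definition bd2 (c : chain2) : chain1 :=
  \sum_(p : gT * gT) (e1 p.2 - e1 (p.1 * p.2)%g + e1 p.1) *~ c p.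

Definition bd3 (c : chain3) : chain2 :=
  \sum_(p : gT * gT * gT)
     (e2 p.1.2 p.2 - e2 (p.1.1 * p.1.2)%g p.2
      + e2 p.1.1 (p.1.2 * p.2)%g - e2 p.1.1 p.1.2) *~ c p.

Definition is_2cycle (c : chain2) : Prop := bd2 c = 0.
Definition is_2boundary (c : chain2) : Prop := exists b : chain3, c = bd3 b.

(* Ganea's homomorphism H_1(G) (x) Z(G) -> H_2(G) sends (g G') (x) z to the
   homology class of the commutator cycle [g|z] - [z|g] (the Pontryagin
   product of the 1-cycles [g] and [z], induced by multiplication
   G x Z(G) -> G).  Since H_1(G) (x) Z(G) is generated by the simple tensors
   (g G') (x) z, its image is the subgroup of H_2(G) generated by these
   classes. *)
Definition ganea_cycle (g z : gT) : chain2 := e2 g z - e2 z g.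

Definition ganea_epi : Prop :=
  forall c : chain2, is_2cycle c ->
    exists a : {ffun (gT * gT)%type -> int},
      is_2boundary
        (c - \sum_(p : gT * gT | p.2 \in 'Z([set: gT])%g) ganea_cycle p.1 p.2 *~ a p).

End Bar.

(* Main.v *)
Require Import Defs.
From mathcomp Require Import all_boot all_algebra all_fingroup all_solvable.
From mathcomp Require Import center ring.
From Stdlib Require Import Setoid Morphisms.
From mathcomp Require Import zify.
Set Implicit Arguments. Unset Strict Implicit. Unset Printing Implicit Defensive.
Import GRing.Theory.
Local Open Scope ring_scope.

Section Chains.
Variable gT : finGroupType.
Local Notation C2 := (chain2 gT).

Definition gsum (a : {ffun (gT * gT)%type -> int}) : C2 :=
  \sum_(p : gT * gT | p.2 \in 'Z([set: gT])%g) ganea_cycle p.1 p.2 *~ a p.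

Definition SS (c : C2) : Prop := exists a, is_2boundary (c - gsum a).

Lemma bd3D (x y : chain3 gT) : bd3 (x + y) = bd3 x + bd3 y.
Proof. rewrite /bd3 -big_split /=; apply: eq_bigr => p _; by rewrite ffunE mulrzDr. Qed.
Lemma bd3N (x : chain3 gT) : bd3 (- x) = - bd3 x.
Proof. rewrite /bd3 -sumrN; apply: eq_bigr => p _; by rewrite ffunE mulrNz. Qed.
Lemma gsumD (x y : {ffun (gT*gT)%type -> int}) : gsum (x + y) = gsum x + gsum y.
Proof. rewrite /gsum -big_split /=; apply: eq_bigr => p _; by rewrite ffunE mulrzDr. Qed.
Lemma gsumN (x : {ffun (gT*gT)%type -> int}) : gsum (- x) = - gsum x.
Proof. rewrite /gsum -sumrN; apply: eq_bigr => p _; by rewrite ffunE mulrNz. Qed.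

Lemma SS0 : SS 0.
Proof.
exists 0; exists 0; rewrite /gsum /bd3 !big1 ?subrr // => p _; by rewrite ffunE mulr0z.
Qed.

Lemma SSD (x y : C2) : SS x -> SS y -> SS (x + y).
Proof.
move=> [a [b hb]] [a' [b' hb']]; exists (a + a'); exists (b + b').
by rewrite gsumD bd3D -hb -hb' addrACA opprD.
Qed.

Lemma SSN (x : C2) : SS x -> SS (- x).
Proof.
move=> [a [b hb]]; exists (- a); exists (- b).
by rewrite gsumN bd3N -hb opprB opprK addrC.
Qed.

Lemma SSB (x y : C2) : SS x -> SS y -> SS (x - y).
Proof. by move=> hx hy; apply: SSD => //; apply: SSN. Qed.

Lemma SSbd3 (b : chain3 gT) : SS (bd3 b).
Proof. exists 0; exists b; by rewrite /gsum big1 ?subr0 // => p _; rewrite ffunE mulr0z. Qed.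

Lemma SSMn (x : C2) n : SS x -> SS (x *+ n).
Proof. move=> hx; elim: n => [|n ih]; first by rewrite mulr0n; apply: SS0.
by rewrite mulrS; apply: SSD. Qed.

Lemma SSMz (x : C2) z : SS x -> SS (x *~ z).
Proof.
move=> hx; case: z => n; first by rewrite -pmulrn; apply: SSMn.
by rewrite NegzE mulrNz; apply: SSN; rewrite -pmulrn; apply: SSMn.
Qed.

Lemma SS_sum (I : finType) (P : pred I) (F : I -> C2) :
  (forall i, P i -> SS (F i)) -> SS (\sum_(i | P i) F i).
Proof.
move=> h; apply: (big_ind SS) => //; [exact: SS0 | exact: SSD].
Qed.

Lemma SSganea g z : z \in 'Z([set: gT])%g -> SS (ganea_cycle g z).
Proof.
move=> hz; exists [ffun p => ((p == (g, z)) : int)]; exists 0.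
rewrite /gsum (bigD1 (g, z)) //= big1 ?ffunE ?eqxx ?addr0.
  rewrite mulr1z subrr /bd3 big1 // => p _; by rewrite ffunE mulr0z.
by move=> p /andP [_ hp]; rewrite ffunE (negbTE hp) mulr0z.
Qed.

Definition e3 (g h k : gT) : chain3 gT := [ffun p => (p == (g, h, k))%:R].

Lemma bd3e3 g h k : bd3 (e3 g h k) =
  e2 h k - e2 (g * h)%g k + e2 g (h * k)%g - e2 g h.
Proof.
rewrite /bd3 (bigD1 (g, h, k)) //= big1 ?ffunE ?eqxx ?addr0 //.
by move=> p /negbTE hp; rewrite ffunE hp mulr0z.
Qed.

Lemma SScoc g h k : SS (e2 h k - e2 (g * h)%g k + e2 g (h * k)%g - e2 g h).
Proof. rewrite -bd3e3; exact: SSbd3. Qed.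

Section Lin.
Variable V : zmodType.
Variable T : gT -> V.
Definition LL (f : chain1 gT) : V := \sum_x T x *~ f x.
Lemma LLD f g : LL (f + g) = LL f + LL g.
Proof. rewrite /LL -big_split; apply: eq_bigr => x _; by rewrite ffunE mulrzDr. Qed.
Lemma LLN f : LL (- f) = - LL f.
Proof. rewrite /LL -sumrN; apply: eq_bigr => x _; by rewrite ffunE mulrNz. Qed.
Lemma LLB f g : LL (f - g) = LL f - LL g.
Proof. by rewrite LLD LLN. Qed.
Lemma LLMz f z : LL (f *~ z) = LL f *~ z.
Proof. rewrite /LL mulrz_suml; apply: eq_bigr => x _; by rewrite ffunMzE mulrzz mulrzA. Qed.
Lemma LLsum (I : finType) (F : I -> chain1 gT) : LL (\sum_i F i) = \sum_i LL (F i).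
Proof.
rewrite /LL exchange_big /=; apply: eq_bigr => x _.
by rewrite sum_ffunE mulrz_sumr.
Qed.
Lemma LLe1 y : LL (e1 y) = T y.
Proof.
rewrite /LL (bigD1 y) //= big1 ?ffunE ?eqxx ?addr0 ?mulr1z //.
by move=> x hx; rewrite ffunE (negbTE hx) mulr0z.
Qed.
Lemma LLbd2 c : LL (bd2 c) = \sum_p (T p.2 - T (p.1 * p.2)%g + T p.1) *~ c p.
Proof.
rewrite /bd2 LLsum; apply: eq_bigr => p _.
by rewrite LLMz LLD LLB !LLe1.
Qed.
Lemma cycle_sum c : is_2cycle c -> \sum_p (T p.2 - T (p.1 * p.2)%g + T p.1) *~ c p = 0.
Proof.
move=> hc; rewrite -LLbd2 hc /LL big1 // => x _; by rewrite ffunE mulr0z.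
Qed.
End Lin.

Lemma chain2_expand (c : C2) : c = \sum_p e2 p.1 p.2 *~ c p.
Proof.
apply/ffunP => q; rewrite sum_ffunE (bigD1 q) //= big1 ?ffunMzE ?ffunE -?surjective_pairing ?eqxx ?addr0 ?mulr1z //; first by rewrite mulrzz mul1r.
by move=> p hp; rewrite ffunMzE ffunE -surjective_pairing eq_sym (negbTE hp) mulrzz mul0r.
Qed.

Ltac fsolve := apply/ffunP => ?; rewrite ?(ffunE, ffunMzE, mulrzz); ring.

Lemma SS_eq (x y : C2) : SS x -> x = y -> SS y.
Proof. by move=> h <-. Qed.

Definition M := (C2 * gT)%type.
Definition mul (x y : M) : M := (x.1 + y.1 + e2 x.2 y.2, (x.2 * y.2)%g).
Definition eqv (x y : M) : Prop := x.2 = y.2 /\ SS (x.1 - y.1).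
Definition tr (x : M) (v : C2) : M := (x.1 + v, x.2).
Definition E1 : M := (- e2 1%g 1%g, 1%g).

Lemma eqv_refl x : eqv x x.
Proof. split=> //; rewrite subrr; exact: SS0. Qed.
Lemma eqv_sym x y : eqv x y -> eqv y x.
Proof. move=> [h1 h2]; split=> //; rewrite -opprB; exact: SSN. Qed.
Lemma eqv_trans x y z : eqv x y -> eqv y z -> eqv x z.
Proof.
move=> [h1 h2] [h3 h4]; split; first by rewrite h1.
apply: SS_eq (SSD h2 h4) _; fsolve.
Qed.

#[global] Instance eqv_Equiv : Equivalence eqv.
Proof. split; [exact: eqv_refl | exact: eqv_sym | exact: eqv_trans]. Qed.

#[global] Instance mul_Proper : Proper (eqv ==> eqv ==> eqv) mul.
Proof.
move=> x x' [h1 h2] y y' [h3 h4]; split; first by rewrite /= h1 h3.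
rewrite /mul /= h1 h3; apply: SS_eq (SSD h2 h4) _; fsolve.
Qed.

#[global] Instance tr_Proper : Proper (eqv ==> eq ==> eqv) tr.
Proof.
move=> x x' [h1 h2] v _ <-; split=> //=; apply: SS_eq h2 _; fsolve.
Qed.

Lemma mulA x y z : eqv (mul (mul x y) z) (mul x (mul y z)).
Proof.
split; first by rewrite /= mulgA.
apply: SS_eq (SSN (SScoc x.2 y.2 z.2)) _; rewrite /=; fsolve.
Qed.

Lemma trl x y v : mul (tr x v) y = tr (mul x y) v.
Proof. by rewrite /mul /tr /=; congr (_, _); fsolve. Qed.
Lemma trr x y v : mul x (tr y v) = tr (mul x y) v.
Proof. by rewrite /mul /tr /=; congr (_, _); fsolve. Qed.
Lemma trD x v w : tr (tr x v) w = tr x (v + w).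
Proof. by rewrite /tr /= addrA. Qed.
Lemma tr0 x : tr x 0 = x.
Proof. by rewrite /tr addr0; case: x. Qed.

Lemma mul1x x : eqv (mul E1 x) x.
Proof.
split; first by rewrite /= mul1g.
apply: SS_eq (SScoc 1%g 1%g x.2) _; rewrite /= !mul1g; fsolve.
Qed.
Lemma mulx1 x : eqv (mul x E1) x.
Proof.
split; first by rewrite /= mulg1.
apply: SS_eq (SSN (SScoc x.2 1%g 1%g)) _; rewrite /= !mulg1; fsolve.
Qed.

Lemma eqv_same x y : x.2 = y.2 -> y = tr x (y.1 - x.1).
Proof. by case: x y => [x1 x2] [y1 y2] /= ->; rewrite /tr /= addrC subrK. Qed.

Fixpoint pw (x : M) n : M := if n is n'.+1 then mul x (pw x n') else E1.

Lemma pw2 x n : (pw x n).2 = (x.2 ^+ n)%g.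
Proof. elim: n => [|n ih] //=; by rewrite ih expgS. Qed.

Lemma pwD x i j : eqv (pw x (i + j)) (mul (pw x i) (pw x j)).
Proof.
elim: i => [|i ih] /=; first by symmetry; apply: mul1x.
setoid_rewrite ih; symmetry; apply: mulA.
Qed.

Lemma eqv_tr x y v w : eqv x y -> v = w -> eqv (tr x v) (tr y w).
Proof. by move=> h <-; apply: tr_Proper. Qed.

Lemma eqv_trSS x y v : eqv x (tr y v) -> SS (x.1 - y.1 - v).
Proof. move=> [_ h]; apply: SS_eq h _; rewrite /tr /=; fsolve. Qed.

Section Meta.
Variables (a b : gT) (m n t s : nat) (ia jb : gT -> nat).
Hypotheses (m_gt0 : (0 < m)%N) (n_gt0 : (0 < n)%N) (s_gt0 : (0 < s)%N).
Hypotheses (am : (a ^+ m = 1)%g) (bn : (b ^+ n = a ^+ t)%g) (ba : (b * a = a ^+ s * b)%g).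
Hypotheses (ia_lt : forall g, (ia g < m)%N) (jb_lt : forall g, (jb g < n)%N).
Hypothesis nfE : forall g, g = (a ^+ (ia g) * b ^+ (jb g))%g.
Hypothesis nfU : forall i j, (i < m)%N -> (j < n)%N ->
  ia (a ^+ i * b ^+ j)%g = i /\ jb (a ^+ i * b ^+ j)%g = j.

Definition At : M := (0, a).
Definition Bt : M := (0, b).
Definition al : C2 := (pw At m).1 - E1.1.
Definition be : C2 := (pw Bt n).1 - (pw At t).1.
Definition ga : C2 := (mul Bt At).1 - (mul (pw At s) Bt).1.

Lemma pwAm : pw At m = tr E1 al.
Proof. apply: eqv_same; by rewrite pw2 am. Qed.
Lemma pwBn : pw Bt n = tr (pw At t) be.
Proof. apply: eqv_same; by rewrite !pw2 bn. Qed.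
Lemma BA : mul Bt At = tr (mul (pw At s) Bt) ga.
Proof. apply: eqv_same; by rewrite /= pw2 ba. Qed.

Lemma L1 i e : eqv (pw At (i + m * e)) (tr (pw At i) (al *+ e)).
Proof.
elim: e => [|e ih]; first by rewrite muln0 addn0 mulr0n tr0; reflexivity.
rewrite mulnS addnCA addnC.
setoid_rewrite (pwD At (i + m * e) m); rewrite pwAm trr.
setoid_rewrite (mulx1 (pw At (i + m * e))); setoid_rewrite ih.
by rewrite trD mulrSr; reflexivity.
Qed.

Lemma L2 k : eqv (mul Bt (pw At k)) (tr (mul (pw At (s * k)) Bt) (ga *+ k)).
Proof.
elim: k => [|k ih].
  rewrite muln0 mulr0n tr0 /=; setoid_rewrite (mulx1 Bt); symmetry; exact: mul1x.
rewrite /= -(mulA Bt At) BA trl (mulA (pw At s) Bt (pw At k)) ih trr.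
rewrite -(mulA (pw At s)) -pwD -mulnS trD mulrSr; reflexivity.
Qed.

Fixpoint geo j := if j is j'.+1 then (s ^ j' + geo j')%N else 0%N.

Lemma L3 j k : eqv (mul (pw Bt j) (pw At k))
  (tr (mul (pw At (k * s ^ j)) (pw Bt j)) (ga *+ (k * geo j))).
Proof.
elim: j => [|j ih].
  rewrite expn0 muln1 muln0 mulr0n tr0 /=; setoid_rewrite (mul1x (pw At k)).
  symmetry; exact: mulx1.
rewrite /= (mulA Bt (pw Bt j)) ih trr -(mulA Bt) L2 trl trD (mulA (pw At _) Bt).
rewrite expnS mulnCA mulnDr mulrnDr; reflexivity.
Qed.

Lemma L4 q r : eqv (pw Bt (n * q + r)) (tr (mul (pw At (t * q)) (pw Bt r)) (be *+ q)).
Proof.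
elim: q => [|q ih].
  rewrite !muln0 add0n mulr0n tr0 /=; symmetry; exact: mul1x.
rewrite mulnS -addnA pwD pwBn trl ih trr trD -(mulA (pw At t)) -pwD -mulnS.
rewrite mulrSr; reflexivity.
Qed.

Definition tt (g : gT) : M := mul (pw At (ia g)) (pw Bt (jb g)).
Lemma tt2 g : (tt g).2 = g.
Proof. by rewrite /tt /= !pw2 -nfE. Qed.

Definition qq (g h : gT) := ((jb g + jb h) %/ n)%N.
Definition XX (g h : gT) := (ia g + ia h * s ^ jb g + t * qq g h)%N.
Definition pp (g h : gT) := (XX g h %/ m)%N.
Definition uu (g h : gT) := (ia h * geo (jb g))%N.
Definition kap (g h : gT) : C2 := al *+ pp g h + be *+ qq g h + ga *+ uu g h.

Lemma e1_eq g h : (jb g + jb h = n * qq g h + (jb g + jb h) %% n)%N.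
Proof. by rewrite /qq mulnC -divn_eq. Qed.
Lemma e2_eq g h : (XX g h = (XX g h) %% m + m * pp g h)%N.
Proof. by rewrite /pp mulnC addnC -divn_eq. Qed.

Lemma L5H g h : eqv (mul (tt g) (tt h))
   (tr (mul (pw At (XX g h %% m)) (pw Bt ((jb g + jb h) %% n))) (kap g h)).
Proof.
have e1 := e1_eq g h; have e2 := e2_eq g h.
  rewrite /tt (mulA (pw At _)) -(mulA (pw Bt _)) L3 trl trr.
  rewrite (mulA (pw At (ia h * _))) -pwD -(mulA (pw At (ia g))) -pwD.
  rewrite [in pw Bt (jb g + jb h)]e1 L4 trr trD -(mulA (pw At _)) -pwD.
  rewrite -/(XX g h) [in pw At (XX g h)]e2 L1 trl trD.
  by rewrite /kap addrA; reflexivity.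
Qed.

Lemma nf_mul g h : ia (g * h)%g = (XX g h %% m)%N /\ jb (g * h)%g = ((jb g + jb h) %% n)%N.
Proof.
have := L5H g h => -[h2 _]; move: h2; rewrite /= !pw2 -!nfE => ->.
exact: nfU (ltn_pmod (XX g h) m_gt0) (ltn_pmod (jb g + jb h) n_gt0).
Qed.

Lemma L5 g h : eqv (mul (tt g) (tt h)) (tr (tt (g * h)%g) (kap g h)).
Proof. by rewrite /tt; case: (nf_mul g h) => -> ->; exact: L5H. Qed.


Lemma geo_int j : (s ^ j)%:Z = 1 + (s%:Z - 1) * (geo j)%:Z.
Proof.
elim: j => [|j ih] /=; first by rewrite expn0 mulr0 addr0.
rewrite expnS PoszM PoszD ih; ring.
Qed.

Lemma eps_j g h : (jb h)%:Z - (jb (g * h)%g)%:Z + (jb g)%:Z = n%:Z * (qq g h)%:Z.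
Proof.
have E := congr1 Posz (e1_eq g h); rewrite PoszD PoszD PoszM in E.
case: (nf_mul g h) => _ ->; lia.
Qed.

Lemma eps_i g h : (ia h)%:Z - (ia (g * h)%g)%:Z + (ia g)%:Z =
  m%:Z * (pp g h)%:Z - t%:Z * (qq g h)%:Z - (s%:Z - 1) * (uu g h)%:Z.
Proof.
have E := congr1 Posz (e2_eq g h); rewrite PoszD PoszM in E.
case: (nf_mul g h) => -> _.
have X : (XX g h)%:Z = (ia g)%:Z + (ia h)%:Z * (s ^ jb g)%:Z + t%:Z * (qq g h)%:Z.
  by rewrite /XX !PoszD !PoszM.
rewrite geo_int in X; rewrite /uu PoszM.
have E2 : (XX g h %% m)%:Z = (XX g h)%:Z - m%:Z * (pp g h)%:Z by rewrite E; ring.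
rewrite E2 X; ring.
Qed.

Definition dd := gcdn m s.-1.
Definition k0 := (m %/ dd)%N.
Definition e0 := (s.-1 %/ dd)%N.

Lemma dd_gt0 : (0 < dd)%N.
Proof. by rewrite /dd gcdn_gt0 m_gt0. Qed.
Lemma mE : m = (k0 * dd)%N.
Proof. by rewrite /k0 divnK // /dd dvdn_gcdl. Qed.
Lemma s1E : s.-1 = (e0 * dd)%N.
Proof. by rewrite /e0 divnK // /dd dvdn_gcdr. Qed.

Lemma central_ak (x : gT) : commute x a -> commute x b -> x \in 'Z([set: gT])%g.
Proof.
move=> ha hb; apply/centerP; split; first by rewrite inE.
move=> y _; rewrite (nfE y); apply: commuteM; exact: commuteX.
Qed.

Lemma SS_gen : SS (al *+ e0 + ga *+ k0).
Proof.
have hs : (s * k0 = k0 + m * e0)%N.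
  have D1 := s1E; have D2 := mE; have := prednK s_gt0; nia.
have H := L2 k0; rewrite hs L1 trl trD in H.
have H' := eqv_trSS H.
have [h2 _] := H; move: h2; rewrite /= !pw2 => hc.
have G : SS (ganea_cycle b (a ^+ k0)%g).
  apply: SSganea; apply: central_ak; last by rewrite /commute hc.
  apply/commute_sym; apply: commuteX; exact: commute_refl.
apply: SS_eq (SSB G H') _; rewrite /ganea_cycle /= !pw2; fsolve.
Qed.

Lemma SS_final (P U : int) : m%:Z * P = (s%:Z - 1) * U -> SS (al *~ P + ga *~ U).
Proof.
move=> hPU.
have hs1 : (s%:Z - 1 = s.-1%:Z) by have := prednK s_gt0; lia.
have k0_gt0 : (0 < k0)%N by have := mE; lia.
have hk : k0%:Z * P = e0%:Z * U.
  have : dd%:Z * (k0%:Z * P - e0%:Z * U) = 0.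
    by rewrite mulrBr !mulrA -!PoszM mulnC -mE [(dd * e0)%N]mulnC -s1E hPU hs1 subrr.
  by move/eqP; rewrite mulf_eq0 subr_eq0 => /orP [/eqP /= | /eqP ->] //; have := dd_gt0; lia.
have cop : coprimez k0 e0.
  have := muln_gcdl k0 e0 dd; rewrite -mE -s1E -/dd => h.
  have g1 : gcdn k0 e0 = 1%N by apply/eqP; rewrite -(eqn_pmul2r dd_gt0) mul1n h.
  by rewrite /coprimez /gcdz /= g1.
have : (k0%:Z %| e0%:Z * U)%Z by rewrite -hk dvdz_mulr.
rewrite Gauss_dvdzr // => /dvdzP [l hU].
have hP : P = l * e0%:Z.
  have nz : (k0%:Z != 0) by rewrite eqz_nat -lt0n.
  apply: (mulfI nz); rewrite hk hU; ring.
rewrite hP hU -!mulrzA_C -mulrzDl -!pmulrn.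
apply: SSMz; exact: SS_gen.
Qed.

Lemma SS_sumB (I : finType) (F G : I -> C2) :
  (forall i, SS (F i - G i)) -> SS (\sum_i F i - \sum_i G i).
Proof. move=> h; rewrite -sumrB; apply: SS_sum => i _; exact: h. Qed.

Lemma mulE1 (x y : M) : (mul x y).1 = x.1 + y.1 + e2 x.2 y.2.
Proof. by []. Qed.

Lemma main_cycle c : is_2cycle c -> SS c.
Proof.
move=> hc.
pose T := fun g => (tt g).1.
pose kk := fun p : gT * gT => (mul (tt p.1) (tt p.2)).1 - (tt (p.1 * p.2)%g).1.
have K p : SS (kk p - kap p.1 p.2).
  by have := eqv_trSS (L5 p.1 p.2); rewrite /kk.
have Z := cycle_sum T hc.
have decomp : c = \sum_p kk p *~ c p.
  have E : \sum_p kk p *~ c p = \sum_p e2 p.1 p.2 *~ c p +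
     \sum_p (T p.2 - T (p.1 * p.2)%g + T p.1) *~ c p.
    rewrite -big_split; apply: eq_bigr => p _.
    rewrite /kk /T mulE1 !tt2; fsolve.
  by rewrite E Z addr0 -chain2_expand.
pose P := \sum_(p : gT * gT) (pp p.1 p.2)%:Z * c p.
pose Q := \sum_(p : gT * gT) (qq p.1 p.2)%:Z * c p.
pose U := \sum_(p : gT * gT) (uu p.1 p.2)%:Z * c p.
have S1 : SS (c - (al *~ P + be *~ Q + ga *~ U)).
  have -> : al *~ P + be *~ Q + ga *~ U = \sum_p kap p.1 p.2 *~ c p.
    rewrite !mulrz_sumr -!big_split; apply: eq_bigr => p _ /=.
    by rewrite /kap !mulrzA -!pmulrn -!mulrzDl.
  rewrite {1}decomp; apply: SS_sumB => p.
  apply: SS_eq (SSMz (c p) (K p)) _; fsolve.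
have ZJ := cycle_sum (fun g => (jb g)%:Z) hc.
have ZI := cycle_sum (fun g => (ia g)%:Z) hc.
have HQ : n%:Z * Q = 0.
  rewrite -ZJ /Q mulr_sumr; apply: eq_bigr => p _.
  by rewrite eps_j mulrzz mulrA.
have Q0 : Q = 0.
  by move/eqP: HQ; rewrite mulf_eq0 => /orP [/eqP|/eqP] //; lia.
have HP : m%:Z * P - t%:Z * Q - (s%:Z - 1) * U = 0.
  rewrite -ZI /P /Q /U !mulr_sumr -!sumrB; apply: eq_bigr => p _.
  rewrite eps_i mulrzz; ring.
rewrite Q0 mulr0 subr0 in HP.
have := SS_final (P:=P) (U:=U); rewrite (subr0_eq HP) => /(_ erefl) HS.
apply: SS_eq (SSD S1 HS) _; rewrite Q0 mulr0z addr0 subrK //.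
Qed.
End Meta.
End Chains.


Theorem proposition3p1 (gT : finGroupType) :
  metacyclic [set: gT]%g -> ganea_epi gT.
Proof.
case/existsP => H /and3P [cH nH cQ].
have NH x : x \in 'N(H)%g by apply: (subsetP (normal_norm nH)); rewrite inE.
case/cyclicP: cH => a Ha.
case/cyclicP: cQ => cb Hcb.
pose b := repr cb.
have cbE : coset H b = cb by rewrite /b coset_reprK.
pose m := #[a]%g; pose n := #[cb]%g.
have aH : a \in H by rewrite Ha cycle_id.
have cosM x y : coset H (x * y)%g = (coset H x * coset H y)%g by rewrite morphM.
have cosX x k : coset H (x ^+ k)%g = (coset H x ^+ k)%g by rewrite morphX.
have cosa k : coset H (a ^+ k)%g = 1%g by rewrite coset_id // groupX.
have m_gt0 : (0 < m)%N by exact: order_gt0.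
have n_gt0 : (0 < n)%N by exact: order_gt0.
have am : (a ^+ m = 1)%g by exact: expg_order.
have [t bn] : exists t, (b ^+ n = a ^+ t)%g.
  have : (b ^+ n)%g \in H by apply: coset_idr; rewrite ?cosX ?cbE ?expg_order.
  by rewrite Ha => /cycleP.
have [s0 hs0] : exists s0, (a ^ b^-1 = a ^+ s0)%g.
  have : (a ^ b^-1)%g \in H by rewrite memJ_norm.
  by rewrite Ha => /cycleP.
pose s := (s0 + m)%N.
have s_gt0 : (0 < s)%N by rewrite /s addn_gt0 m_gt0 orbT.
have ba : (b * a = a ^+ s * b)%g.
  rewrite /s expgD am mulg1 -hs0 /conjg invgK.
  by rewrite -!mulgA mulVg mulg1.
have ex (g : gT) : exists ij : nat * nat, [&& (ij.1 < m)%N, (ij.2 < n)%N & (g == a ^+ ij.1 * b ^+ ij.2)%g].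
  have : coset H g \in <[cb]>%g by rewrite -Hcb mem_quotient // inE.
  case/cyclePmin => j jlt hj.
  have : (g * (b ^+ j)^-1)%g \in H.
    apply: coset_idr; first exact: NH.
    rewrite morphM ?NH // morphV ?NH // morphX ?NH //.
    change (coset H g * (coset H b ^+ j)^-1 = 1)%g; by rewrite hj cbE mulgV.
  rewrite Ha => /cyclePmin [i ilt hi].
  exists (i, j); rewrite /= ilt jlt -hi mulgKV eqxx //.
pose ia g := (xchoose (ex g)).1.
pose jb g := (xchoose (ex g)).2.
have spec g : [&& (ia g < m)%N, (jb g < n)%N & (g == a ^+ ia g * b ^+ jb g)%g] := xchooseP (ex g).
have nfE g : g = (a ^+ ia g * b ^+ jb g)%g.
  by case/and3P: (spec g) => _ _ /eqP.
have uniq i j i' j' : (i < m)%N -> (j < n)%N -> (i' < m)%N -> (j' < n)%N ->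
    (a ^+ i * b ^+ j = a ^+ i' * b ^+ j')%g -> i = i' /\ j = j'.
  move=> hi hj hi' hj' E.
  have Ej : j = j'.
    have := congr1 (coset H) E; rewrite !cosM !cosa !mul1g !cosX cbE => /eqP.
    by rewrite eq_expg_mod_order -/n !modn_small // => /eqP.
  split=> //; move: E; rewrite -Ej => /mulIg /eqP.
  by rewrite eq_expg_mod_order -/m !modn_small // => /eqP.
have nfU i j : (i < m)%N -> (j < n)%N ->
    ia (a ^+ i * b ^+ j)%g = i /\ jb (a ^+ i * b ^+ j)%g = j.
  move=> hi hj; case/and3P: (spec (a ^+ i * b ^+ j)%g) => hi' hj' /eqP E.
  by have [-> ->] := uniq _ _ _ _ hi' hj' hi hj (esym E).
move=> c hc.
exact: (main_cycle m_gt0 n_gt0 s_gt0 am bn ba nfE nfU hc).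
Qed.
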